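(* Let $\langle A,C,d,O,v,(\prec_a)_{a\in A}\rangle$ be an infinite sequential game, let $a\in A$, and assume: (1) $\prec_a$ is a strict weak order; (2) for every play $p\in C^\omega$ and increasing $\varphi:\mathbb{N}\to\mathbb{N}$, if $d(p_{<\varphi(n)})=a$ and $G_a(p_{<\varphi(n+1)})\subsetneq G_a(p_{<\varphi(n)})$ for all $n\in\mathbb{N}$, then $v(p)\in\bigcap_{n\in\mathbb{N}}G_a(p_{<\varphi(n)})$; (3) for every $\gamma\in C^*$ there exists a strategy $s$ of $a$ with $g_a(\gamma,s)=G_a(\gamma)$. Then there exists a strategy $s$ of $a$ such that $g_a(\gamma,s)=G_a(\gamma)$ for all $\gamma\in C^*$.
   Context: An infinite sequential game $\langle A,C,d,O,v,(\prec_a)_{a\in A}\rangle$ consists of a non-empty set of agents $A$, a non-empty set of choices $C$, $d:C^*\to A$ (the agent choosing after each finite history), a non-empty set of outcomes $O$, $v:C^\omega\to O$, and binary relations $\prec_a$ on $O$. A strategy of $a$ is a function $s:d^{-1}(\{a\})\to C$. For a partial function $t:\subseteq C^*\to C$, $P(t)$ is the set of plays $p(\sigma)$ (where $p_n=\sigma(p_{<n})$) over all total $\sigma:C^*\to C$ extending $t$. For $\gamma\in C^*$ and strategy $s$ of $a$, $s|_\gamma$ is the restriction of $s$ to histories in $d^{-1}(\{a\})$ extending $\gamma$; $g_a(\gamma,s):=\{o\in O\mid\exists p\in P(s|_\gamma)\cap\gamma C^\omega,\ \neg(o\prec_a v(p))\}$ and $G_a(\gamma):=\bigcap_s g_a(\gamma,s)$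 over all strategies $s$ of $a$. $p_{<n}$ is the length-$n$ prefix of $p$. A strict weak order is an irreflexive, transitive relation $\prec$ such that $\neg(x\prec y)\wedge\neg(y\prec z)$ implies $\neg(x\prec z)$. *)

(* Defs.v *)
From Stdlib Require Import List.
Import ListNotations.
Set Implicit Arguments.

Section Games.
Variables (A C O : Type).

Definition prefix (p : nat -> C) (n : nat) : list C := map p (seq 0 n).

Fixpoint hist (sigma : list C -> C) (n : nat) : list C :=
  match n with
  | 0 => []
  | S m => hist sigma m ++ [sigma (hist sigma m)]
  end.

Definition play (sigma : list C -> C) : nat -> C := fun n => sigma (hist sigma n).

Definition Pplays (Dom : list C -> Prop) (t : forall h, Dom h -> C) (p : nat -> C) : Prop :=
  exists sigma : list C -> C,
    (forall h (Hh : Dom h), sigma h = t h Hh) /\ (forall n, p n = play sigma n).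

Variable d : list C -> A.

Definition strategy (a : A) : Type := forall h : list C, d h = a -> C.

Definition restr_dom (a : A) (gamma : list C) (h : list C) : Prop :=
  d h = a /\ exists l, h = gamma ++ l.

Definition restr (a : A) (s : strategy a) (gamma : list C)
  : forall h, restr_dom a gamma h -> C :=
  fun h Hh => s h (proj1 Hh).

Definition extends_hist (gamma : list C) (p : nat -> C) : Prop :=
  prefix p (length gamma) = gamma.

Variables (v : (nat -> C) -> O) (lt : A -> O -> O -> Prop).

Definition g_a (a : A) (gamma : list C) (s : strategy a) (o : O) : Prop :=
  exists p, @Pplays (restr_dom a gamma) (@restr a s gamma) p /\ extends_hist gamma p /\ ~ lt a o (v p).

Definition G_a (a : A) (gamma : list C) (o : O) : Prop :=
  forall s : strategy a, g_a gamma s o.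

End Games.

Definition set_eq {O : Type} (X Y : O -> Prop) : Prop := forall o, X o <-> Y o.
Definition strict_subset {O : Type} (X Y : O -> Prop) : Prop :=
  (forall o, X o -> Y o) /\ ~ set_eq X Y.

Definition strict_weak_order {O : Type} (R : O -> O -> Prop) : Prop :=
  (forall x, ~ R x x) /\
  (forall x y z, R x y -> R y z -> R x z) /\
  (forall x y z, ~ R x y -> ~ R y z -> ~ R x z).

(* Main.v *)
Require Import Defs.
From Stdlib Require Import List Arith Lia ClassicalEpsilon ProofIrrelevance Classical.
Import ListNotations.

Lemma app_len_inj {T} (x y l r : list T) : x ++ l = y ++ r -> length x = length y -> x = y.
Proof.
  revert y; induction x as [|a x IH]; intros [|b y] E L; simpl in *; try discriminate; auto.
  injection E as -> E. f_equal. apply (IH y E). lia.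
Qed.

Section P.
Context {C : Type}.

Lemma length_prefix (p : nat -> C) n : length (prefix p n) = n.
Proof. unfold prefix. rewrite length_map, length_seq. auto. Qed.

Lemma prefix_S (p : nat -> C) n : prefix p (S n) = prefix p n ++ [p n].
Proof. unfold prefix. rewrite seq_S, map_app. reflexivity. Qed.

Lemma prefix_split (p : nat -> C) j k : j <= k -> prefix p k = prefix p j ++ map p (seq j (k - j)).
Proof.
  intros H. unfold prefix. replace k with (j + (k - j)) at 1 by lia.
  rewrite seq_app, map_app. reflexivity.
Qed.

Lemma prefix_of_prefix (p : nat -> C) k x l : prefix p k = x ++ l -> x = prefix p (length x).
Proof.
  intros E. assert (Hl : length x <= k).
  { rewrite <- (length_prefix p k), E, length_app. lia. }
  rewrite (prefix_split p (length x) k Hl) in E.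
  symmetry. eapply app_len_inj. exact E. apply length_prefix.
Qed.

Lemma prefix_agree_le (p q : nat -> C) M k : prefix q M = prefix p M -> k <= M -> prefix q k = prefix p k.
Proof.
  intros E H. rewrite (prefix_split q k M H), (prefix_split p k M H) in E.
  eapply app_len_inj. exact E. rewrite !length_prefix. auto.
Qed.

Lemma prefix_agree_lt (p q : nat -> C) M k : prefix q M = prefix p M -> k < M -> q k = p k.
Proof.
  intros E H. pose proof (prefix_agree_le p q M (S k) E H) as E2.
  rewrite !prefix_S in E2. apply app_inj_tail in E2. tauto.
Qed.

Lemma prefix_ext (p q : nat -> C) n : (forall k, p k = q k) -> prefix p n = prefix q n.
Proof. intros H. unfold prefix. apply map_ext. auto. Qed.

Lemma hist_play (sigma : list C -> C) n : hist sigma n = prefix (play sigma) n.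
Proof.
  induction n; simpl. reflexivity.
  rewrite prefix_S. change (play sigma n) with (sigma (hist sigma n)). rewrite IHn. reflexivity.
Qed.

Lemma Pplays_iff (Dom : list C -> Prop) (t : forall h, Dom h -> C) p :
  Pplays Dom t p <-> forall n (H : Dom (prefix p n)), p n = t _ H.
Proof.
  split.
  - intros [sigma [Hs Hp]] n H.
    assert (E : hist sigma n = prefix p n).
    { rewrite hist_play. apply prefix_ext. intros; symmetry; auto. }
    rewrite Hp. unfold play. rewrite <- Hs. rewrite E. reflexivity.
  - intros Ht.
    set (sigma := fun h => match excluded_middle_informative (Dom h) with
                           | left H => t h H | right _ => p (length h) end).
    assert (Hh : forall n, hist sigma n = prefix p n).
    { induction n; simpl. reflexivity.
      rewrite prefix_S, IHn. f_equal. f_equal. unfold sigma.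
      destruct (excluded_middle_informative _) as [H|H].
      - symmetry; apply Ht.
      - rewrite length_prefix; reflexivity. }
    exists sigma. split.
    + intros h Hd. unfold sigma. destruct (excluded_middle_informative _) as [H|H].
      * f_equal. apply proof_irrelevance.
      * contradiction.
    + intros n. unfold play. rewrite Hh. unfold sigma.
      destruct (excluded_middle_informative _) as [H|H].
      * apply Ht.
      * rewrite length_prefix; reflexivity.
Qed.
End P.

Section M.
Variables (A C O : Type) (d : list C -> A) (v : (nat -> C) -> O) (lt : A -> O -> O -> Prop) (a : A).

Definition cons_inf (s : strategy d a) lo (p : nat -> C) :=
  forall k, lo <= k -> forall h (H : d h = a), h = prefix p k -> p k = s h H.

Lemma g_iff gamma s o : @g_a A C O d v lt a gamma s o <->
  exists p, prefix p (length gamma) = gamma /\ cons_inf s (length gamma) p /\ ~ lt a o (v p).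
Proof.
  split.
  - intros [p [HP [He Hl]]]. exists p. split; [exact He|]. split; [|exact Hl].
    rewrite Pplays_iff in HP. intros k Hk h H E. subst h.
    assert (Hd : restr_dom d a gamma (prefix p k)).
    { split. exact H. exists (map p (seq (length gamma) (k - length gamma))).
      rewrite (prefix_split p (length gamma) k Hk). unfold extends_hist in He. rewrite He. reflexivity. }
    rewrite (HP k Hd). unfold restr. f_equal. apply proof_irrelevance.
  - intros [p [He [Hc Hl]]]. exists p. split; [|split; [exact He|exact Hl]].
    apply Pplays_iff. intros n [H [l E]]. unfold restr. apply (Hc n); auto.
    rewrite <- (length_prefix p n), E, length_app. lia.
Qed.

Lemma L1 s (p : nat -> C) m M : m <= M ->
  (forall k, m <= k -> k < M -> forall h (H : d h = a), h = prefix p k -> p k = s h H) ->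
  forall o, @g_a A C O d v lt a (prefix p M) s o -> @g_a A C O d v lt a (prefix p m) s o.
Proof.
  intros HmM Hc o Hg. apply g_iff in Hg. apply g_iff.
  destruct Hg as [q [He [Hq Hl]]]. rewrite length_prefix in *.
  exists q. split; [|split; [|exact Hl]].
  - eapply prefix_agree_le; eauto.
  - intros k Hk h H E. destruct (le_lt_dec M k) as [HM|HM].
    + apply Hq; auto.
    + rewrite (prefix_agree_lt p q M k He HM). apply Hc; auto.
      rewrite E. eapply prefix_agree_le; eauto. lia.
Qed.

Lemma G_up gamma x o : (forall x y z, ~ lt a x y -> ~ lt a y z -> ~ lt a x z) ->
  G_a d v lt a gamma x -> ~ lt a o x -> G_a d v lt a gamma o.
Proof.
  intros NT HG Ho s. destruct (HG s) as [p [HP [He Hl]]]. exists p. repeat split; auto.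
  eapply NT; eauto.
Qed.

Lemma G_sub_g gamma s o : G_a d v lt a gamma o -> @g_a A C O d v lt a gamma s o.
Proof. intros H; apply H. Qed.

Notation G := (G_a d v lt a).

Variable Sg : list C -> strategy d a.
Hypothesis HS : forall gamma, set_eq (@g_a A C O d v lt a gamma (Sg gamma)) (G gamma).

Definition keep (pre al : list C) (c : C) : Prop :=
  (forall H : d pre = a, c = Sg al pre H) /\ set_eq (G (pre ++ [c])) (G al).

Definition step pre al c : list C :=
  if excluded_middle_informative (keep pre al c) then al else pre ++ [c].

Fixpoint go (pre al l : list C) : list C :=
  match l with [] => al | c :: r => go (pre ++ [c]) (step pre al c) r end.

Definition anc h := go [] [] h.

Lemma go_snoc l : forall pre al c, go pre al (l ++ [c]) = step (pre ++ l) (go pre al l) c.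
Proof.
  induction l as [|c0 l IH]; intros pre al c; simpl.
  - rewrite app_nil_r. reflexivity.
  - rewrite IH. rewrite <- app_assoc. reflexivity.
Qed.

Lemma anc_snoc h c : anc (h ++ [c]) = step h (anc h) c.
Proof. unfold anc. rewrite go_snoc. reflexivity. Qed.

Lemma anc_is_prefix h : exists l, h = anc h ++ l.
Proof.
  induction h as [|c h IH] using rev_ind.
  - exists []. reflexivity.
  - rewrite anc_snoc. unfold step. destruct (excluded_middle_informative _).
    + destruct IH as [l E]. exists (l ++ [c]). rewrite E at 1. rewrite app_assoc. reflexivity.
    + exists []. rewrite app_nil_r. reflexivity.
Qed.

Lemma anc_G h : set_eq (G h) (G (anc h)).
Proof.
  induction h as [|c h IH] using rev_ind.
  - intro; reflexivity.
  - rewrite anc_snoc. unfold step. destruct (excluded_middle_informative _) as [K|K].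
    + apply K.
    + intro; reflexivity.
Qed.

Section Play.
Variable p : nat -> C.
Definition al k := anc (prefix p k).
Definition m k := length (al k).

Lemma al_eq k : al k = prefix p (m k) /\ m k <= k.
Proof.
  destruct (anc_is_prefix (prefix p k)) as [l E].
  split. apply (prefix_of_prefix p k _ _ E).
  unfold m, al. assert (L : length (prefix p k) = length (anc (prefix p k) ++ l)) by (f_equal; exact E).
  rewrite length_app, length_prefix in L. lia.
Qed.

Lemma I2 k : forall j, m k <= j -> j < k -> forall h (H : d h = a), h = prefix p j -> p j = Sg (al k) h H.
Proof.
  induction k; intros j Hj Hjk h H E. lia.
  unfold m, al in *. rewrite prefix_S, anc_snoc in *. unfold step in *.
  destruct (excluded_middle_informative _) as [K|K].
  - destruct (Nat.eq_dec j k) as [->|Hne].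
    + subst h. apply K.
    + apply IHk; auto. lia.
  - rewrite length_app, length_prefix in Hj. simpl in Hj. lia.
Qed.
End Play.


Lemma strict_sub_trans {T} (X Y Z : T -> Prop) : (forall o, X o -> Y o) -> strict_subset Y Z -> strict_subset X Z.
Proof.
  intros XY [YZ N]. split. auto. intro E. apply N. intro o. split; auto. intro. apply XY, E. auto.
Qed.

Lemma strict_resp {T} (X X' Y Y' : T -> Prop) : set_eq X X' -> set_eq Y Y' -> strict_subset X' Y' -> strict_subset X Y.
Proof.
  intros E1 E2 [S1 N]. split.
  - intros o Ho. apply E2, S1, E1, Ho.
  - intro E. apply N. intro o. specialize (E1 o). specialize (E2 o). specialize (E o). tauto.
Qed.

Hypothesis NT : forall x y z, ~ lt a x y -> ~ lt a y z -> ~ lt a x z.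
Hypothesis H2 : forall (p : nat -> C) (phi : nat -> nat),
      (forall n, phi n < phi (S n)) ->
      (forall n, d (prefix p (phi n)) = a /\
         strict_subset (G_a d v lt a (prefix p (phi (S n))))
                       (G_a d v lt a (prefix p (phi n)))) ->
      forall n, G_a d v lt a (prefix p (phi n)) (v p).

Definition s0 : strategy d a := fun h H => Sg (anc h) h H.

Theorem opt gamma o : @g_a A C O d v lt a gamma s0 o -> G gamma o.
Proof.
  intros Hg. apply g_iff in Hg as [q [He [Hc Hl]]].
  set (n0 := length gamma) in *.
  assert (F : forall k, n0 <= k -> al q (S k) = al q k \/
     (~ set_eq (G (prefix q (S k))) (G (al q k)) /\ al q (S k) = prefix q (S k) /\
      forall o, G (prefix q (S k)) o -> G (al q k) o)).
  { intros k Hk.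
    assert (Hck : forall H : d (prefix q k) = a, q k = Sg (al q k) (prefix q k) H).
    { intros H. apply (Hc k Hk _ H eq_refl). }
    assert (Inc : forall o, G (prefix q (S k)) o -> G (al q k) o).
    { intros o' Ho'. destruct (al_eq q k) as [Ea Hm].
      assert (Hg2 : @g_a A C O d v lt a (prefix q (S k)) (Sg (al q k)) o') by (apply G_sub_g; assumption).
      apply (L1 _ q (m q k) (S k)) in Hg2; [| lia |].
      - rewrite <- Ea in Hg2. apply HS. exact Hg2.
      - intros j Hj1 Hj2 h H E. destruct (Nat.eq_dec j k) as [->|Hne].
        + subst h. apply Hck.
        + apply (I2 q k j); auto; lia. }
    assert (AS : al q (S k) = step (prefix q k) (al q k) (q k)).
    { unfold al. rewrite prefix_S, anc_snoc. reflexivity. }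
    rewrite AS. unfold step.
    destruct (excluded_middle_informative _) as [K|K].
    - left. reflexivity.
    - right. split; [|split; [rewrite prefix_S; reflexivity| exact Inc]].
      intro E. apply K. split.
      + intro H. apply Hck.
      + rewrite <- prefix_S. exact E. }
  assert (chain : forall M, n0 <= M -> forall i, al q (M+i) = al q M \/ strict_subset (G (al q (M+i))) (G (al q M))).
  { intros M HM i. induction i.
    - left. rewrite Nat.add_0_r. reflexivity.
    - replace (M + S i) with (S (M + i)) by lia.
      destruct (F (M+i)) as [E|[NE [E Inc]]]; [lia| rewrite E; exact IHi |].
      assert (Sub : strict_subset (G (al q (S (M+i)))) (G (al q (M+i)))).
      { split. rewrite E. exact Inc. rewrite E. exact NE. }
      right. destruct IHi as [E2|SS].
      + rewrite <- E2. exact Sub.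
      + eapply strict_sub_trans; [|exact SS]. apply Sub. }
  assert (sub_chain : forall k, n0 <= k -> forall o, G (al q k) o -> G gamma o).
  { intros k Hk o' Ho'.
    assert (X : G (al q n0) o').
    { destruct (chain n0 (le_n _) (k - n0)) as [E|[SS _]];
      replace (n0 + (k - n0)) with k in * by lia.
      - rewrite <- E. exact Ho'.
      - apply SS, Ho'. }
    apply (anc_G gamma). unfold al in X. rewrite He in X. exact X. }
  destruct (classic (exists M, n0 <= M /\ forall k, M <= k -> d (prefix q k) = a -> al q k = al q M)) as [[M [HM Hk]]|NB].
  - apply (sub_chain M HM). apply HS. apply g_iff.
    destruct (al_eq q M) as [Ea Hm].
    exists q. change (length (al q M)) with (m q M). split; [|split; [|exact Hl]].
    + symmetry; exact Ea.
    + intros k Hk1 h H E. destruct (le_lt_dec M k) as [HMk|HMk].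
      * rewrite (Hc k (Nat.le_trans _ _ _ HM HMk) h H E). unfold s0.
        subst h. fold (al q k). rewrite (Hk k HMk H). reflexivity.
      * apply (I2 q M k); auto.
  - assert (NB' : forall M, exists k, M <= k /\ n0 <= k /\ d (prefix q k) = a /\ (n0 <= M -> al q k <> al q M)).
    { intros M. destruct (le_lt_dec n0 M) as [HM|HM].
      - apply NNPP; intro N. apply NB. exists M. split; auto. intros k Hk Hd.
        apply NNPP; intro Ne. apply N. exists k. repeat split; auto. lia.
      - apply NNPP; intro N. apply NB. exists n0. split; auto. intros k Hk Hd.
        apply NNPP; intro Ne. apply N. exists k. repeat split; auto. lia. lia. }
    set (f := fun M => proj1_sig (constructive_indefinite_description _ (NB' M))).
    assert (Hf : forall M, M <= f M /\ n0 <= f M /\ d (prefix q (f M)) = a /\ (n0 <= M -> al q (f M) <> al q M)).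
    { intro M. unfold f. destruct (constructive_indefinite_description _ _) as [k Hk]. exact Hk. }
    set (phi := fix phi n := match n with 0 => f n0 | S n => f (phi n) end).
    assert (Hp0 : forall n, n0 <= phi n /\ d (prefix q (phi n)) = a).
    { intros [|n]; simpl; split; apply Hf. }
    assert (HpS : forall n, phi n < phi (S n) /\ strict_subset (G (al q (phi (S n)))) (G (al q (phi n)))).
    { intros n. change (phi (S n)) with (f (phi n)).
      destruct (Hf (phi n)) as [L1' [_ [_ Ne]]]. specialize (Ne (proj1 (Hp0 n))).
      assert (Hlt : phi n < f (phi n)).
      { destruct (Nat.eq_dec (phi n) (f (phi n))) as [E|E]; [|lia]. exfalso; apply Ne; rewrite <- E; reflexivity. }
      split; [exact Hlt|].
      destruct (chain (phi n) (proj1 (Hp0 n)) (f (phi n) - phi n)) as [E|SS];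
        replace (phi n + (f (phi n) - phi n)) with (f (phi n)) in * by lia.
      - contradiction.
      - exact SS. }
    assert (HG : G (prefix q (phi 0)) (v q)).
    { apply (H2 q phi (fun n => proj1 (HpS n))). intro n. split; [apply Hp0|].
      eapply strict_resp; [apply anc_G|apply anc_G|]. apply HpS. }
    apply (sub_chain (phi 0) (proj1 (Hp0 0))). apply (anc_G (prefix q (phi 0))).
    eapply G_up; eauto.
Qed.
End M.

Theorem lemma21 (A C O : Type) (HC : inhabited C) (HO : inhabited O)
  (d : list C -> A) (v : (nat -> C) -> O) (lt : A -> O -> O -> Prop) (a : A)
  (H1 : strict_weak_order (lt a))
  (H2 : forall (p : nat -> C) (phi : nat -> nat),
      (forall n, phi n < phi (S n)) ->
      (forall n, d (prefix p (phi n)) = a /\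
         strict_subset (G_a d v lt a (prefix p (phi (S n))))
                       (G_a d v lt a (prefix p (phi n)))) ->
      forall n, G_a d v lt a (prefix p (phi n)) (v p))
  (H3 : forall gamma : list C, exists s : strategy d a,
      set_eq (@g_a A C O d v lt a gamma s) (G_a d v lt a gamma)) :
  exists s : strategy d a, forall gamma : list C,
    set_eq (@g_a A C O d v lt a gamma s) (G_a d v lt a gamma).
Proof.
  destruct H1 as [_ [_ NT]].
  set (Sg := fun g => proj1_sig (constructive_indefinite_description _ (H3 g))).
  assert (HS : forall g, set_eq (@g_a A C O d v lt a g (Sg g)) (G_a d v lt a g)).
  { intro g. unfold Sg. destruct (constructive_indefinite_description _ _) as [s Hs]. exact Hs. }
  exists (@s0 A C O d v lt a Sg). intros gamma o. split.
  - eapply opt; eauto.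
  - apply G_sub_g.
Qed.
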